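(* Let $\nu$ be a probability measure on $\mathcal S$. Consider (i) for all disjoint $A,B\subset\mathcal S$ with $\nu[A]\le\frac12$ and $\nu[B]\ge\frac12$: $\nu[A]\le C_{\mathrm{var}}\,\mathrm{cap}(A,B)$; (ii) $\mathrm{Var}_\nu[f]\le C_{\mathrm{PI}}\,\mathcal E(f)$ for all $f\in\ell^2(\mu)$. If (i) holds with $C_{\mathrm{var}}$ then (ii) holds with $C_{\mathrm{PI}}=4C_{\mathrm{var}}$; if (ii) holds with $C_{\mathrm{PI}}$ then (i) holds with $C_{\mathrm{var}}=2C_{\mathrm{PI}}$. In particular the optimal constants satisfy $\frac12C_{\mathrm{var}}\le C_{\mathrm{PI}}\le4C_{\mathrm{var}}$.
   Context: $\mathcal S$ countable; irreducible positive recurrent Markov chain with transition probabilities $p(x,y)$, reversible w.r.t. its invariant probability measure $\mu$; $\mathcal E(f)=\frac12\sum_{x,y}\mu(x)p(x,y)(f(x)-f(y))^2$; $\tau_A=\inf\{t>0:X(t)\in A\}$; $\mathrm{cap}(A,B)=\sum_{x\in A}\mu(x)\mathbb P_x[\tau_B<\tau_A]=\inf\{\mathcal E(g):g|_A=1,g|_B=0\}$, $\mathrm{cap}(\emptyset,B)=0$. *)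

(* Defs.v *)
From Stdlib Require Import Reals Lra List Relations ClassicalEpsilon.
Import ListNotations.
Open Scope R_scope.

Definition fsum {T : Type} (g : T -> R) (l : list T) : R :=
  fold_right (fun x acc => g x + acc) 0 l.

(* Unordered (net) summation over an arbitrary index type T:
   g has sum s iff the finite partial sums over duplicate-free lists
   converge to s along the directed set of finite subsets.
   For real-valued families this is exactly absolute summability. *)
Definition HasSum {T : Type} (g : T -> R) (s : R) : Prop :=
  forall eps : R, 0 < eps ->
    exists L : list T, NoDup L /\
      forall L' : list T, NoDup L' -> incl L L' -> Rabs (fsum g L' - s) < eps.

Definition Summable {T : Type} (g : T -> R) : Prop := exists s, HasSum g s.

(* The value of the sum (meaningful when Summable). *)
Definition sumS {T : Type} (g : T -> R) : R :=
  epsilon (inhabits 0) (fun s => HasSum g s).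

Definition countable (S : Type) : Prop :=
  exists code : S -> nat, forall x y, code x = code y -> x = y.

Definition stochastic {S : Type} (p : S -> S -> R) : Prop :=
  (forall x y, 0 <= p x y) /\ (forall x, HasSum (p x) 1).

Definition irreducible {S : Type} (p : S -> S -> R) : Prop :=
  forall x y, clos_trans S (fun a b => 0 < p a b) x y.

Definition prob_measure {S : Type} (nu : S -> R) : Prop :=
  (forall x, 0 <= nu x) /\ HasSum nu 1.

Definition invariant {S : Type} (p : S -> S -> R) (mu : S -> R) : Prop :=
  forall y, HasSum (fun x => mu x * p x y) (mu y).

Definition reversible {S : Type} (p : S -> S -> R) (mu : S -> R) : Prop :=
  forall x y, mu x * p x y = mu y * p y x.

Definition meas {S : Type} (nu : S -> R) (A : S -> bool) : R :=
  sumS (fun x => if A x then nu x else 0).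

Definition dir_term {S : Type} (p : S -> S -> R) (mu : S -> R) (f : S -> R)
  (xy : S * S) : R :=
  / 2 * mu (fst xy) * p (fst xy) (snd xy) * (f (fst xy) - f (snd xy)) ^ 2.

Definition dirichlet {S : Type} (p : S -> S -> R) (mu : S -> R) (f : S -> R) : R :=
  sumS (dir_term p mu f).

Definition l2 {S : Type} (mu : S -> R) (f : S -> R) : Prop :=
  Summable (fun x => mu x * f x ^ 2).

Definition is_inf (E : R -> Prop) (m : R) : Prop :=
  (forall e, E e -> m <= e) /\ (forall b, (forall e, E e -> b <= e) -> b <= m).

Definition cap_energies {S : Type} (p : S -> S -> R) (mu : S -> R)
  (A B : S -> bool) (e : R) : Prop :=
  exists g : S -> R,
    (forall x, A x = true -> g x = 1) /\
    (forall x, B x = true -> g x = 0) /\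
    HasSum (dir_term p mu g) e.

(* cap(A,B) = inf { E(g) : g|_A = 1, g|_B = 0 }  (Dirichlet principle);
   cap(emptyset, B) = 0. *)
Definition cap {S : Type} (p : S -> S -> R) (mu : S -> R) (A B : S -> bool) : R :=
  epsilon (inhabits 0) (fun c =>
    ((forall x, A x = false) /\ c = 0) \/
    (~ (forall x, A x = false) /\ is_inf (cap_energies p mu A B) c)).

Definition variance {S : Type} (nu : S -> R) (f : S -> R) : R :=
  sumS (fun x => nu x * f x ^ 2) - (sumS (fun x => nu x * f x)) ^ 2.

Definition cond_var {S : Type} (p : S -> S -> R) (mu nu : S -> R) (Cvar : R) : Prop :=
  forall A B : S -> bool,
    (forall x, A x = true -> B x = false) ->
    meas nu A <= / 2 -> / 2 <= meas nu B ->
    meas nu A <= Cvar * cap p mu A B.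

(* Condition (ii) with constant CPI; Var_nu[f] is finite is part of the
   inequality (an infinite variance cannot be bounded by a finite E(f)). *)
Definition cond_PI {S : Type} (p : S -> S -> R) (mu nu : S -> R) (CPI : R) : Prop :=
  forall f : S -> R, l2 mu f ->
    Summable (fun x => nu x * f x ^ 2) /\
    variance nu f <= CPI * dirichlet p mu f.

(* Main.v *)
Require Import Defs.
From Stdlib Require Import Reals Lra Lia Arith List Permutation Classical ClassicalEpsilon.
Import ListNotations.
Open Scope R_scope.

Lemma eq_dec_cl {T : Type} (x y : T) : {x = y} + {x <> y}.
Proof. apply excluded_middle_informative. Qed.

Section Fsum.
Context {T : Type}.

Lemma fsum_nil (g : T -> R) : fsum g [] = 0.
Proof. reflexivity. Qed.

Lemma fsum_cons (g : T -> R) a L : fsum g (a :: L) = g a + fsum g L.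
Proof. reflexivity. Qed.

Lemma fsum_app (g : T -> R) L1 L2 : fsum g (L1 ++ L2) = fsum g L1 + fsum g L2.
Proof. induction L1; simpl; [lra|rewrite IHL1; lra]. Qed.

Lemma fsum_ext (g h : T -> R) L : (forall x, In x L -> g x = h x) -> fsum g L = fsum h L.
Proof. induction L; simpl; intros H; auto. rewrite H, IHL; auto. Qed.

Lemma fsum_le (g h : T -> R) L : (forall x, In x L -> g x <= h x) -> fsum g L <= fsum h L.
Proof. induction L; simpl; intros H; [lra|]. pose proof (H a (or_introl eq_refl)).
  pose proof (IHL (fun x Hx => H x (or_intror Hx))). lra. Qed.

Lemma fsum_plus (g h : T -> R) L : fsum (fun x => g x + h x) L = fsum g L + fsum h L.
Proof. induction L; simpl; lra. Qed.

Lemma fsum_scal (c : R) (g : T -> R) L : fsum (fun x => c * g x) L = c * fsum g L.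
Proof. induction L; simpl; [lra|rewrite IHL; lra]. Qed.

Lemma fsum_minus (g h : T -> R) L : fsum (fun x => g x - h x) L = fsum g L - fsum h L.
Proof. induction L; simpl; lra. Qed.

Lemma fsum_const0 L : fsum (fun _ : T => 0) L = 0.
Proof. induction L; simpl; lra. Qed.

Lemma fsum_nonneg (g : T -> R) L : (forall x, 0 <= g x) -> 0 <= fsum g L.
Proof. intros H; induction L; simpl; [lra|]. pose proof (H a); lra. Qed.

Lemma fsum_perm (g : T -> R) L L' : Permutation L L' -> fsum g L = fsum g L'.
Proof. induction 1; simpl; lra. Qed.

Lemma fsum_incl_le (g : T -> R) L L' : (forall x, 0 <= g x) -> NoDup L -> incl L L' ->
  fsum g L <= fsum g L'.
Proof.
  intros Hg HN. revert L'. induction HN as [|a L Ha HN IH]; intros L' Hi.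
  - simpl. apply fsum_nonneg; auto.
  - assert (Hin : In a L') by (apply Hi; left; auto).
    destruct (in_split _ _ Hin) as [l1 [l2 E]]. subst L'.
    rewrite (fsum_perm g (l1 ++ a :: l2) (a :: l1 ++ l2)).
    + rewrite !fsum_cons. assert (fsum g L <= fsum g (l1 ++ l2)); [|lra].
      apply IH. intros x Hx. assert (In x (l1 ++ a :: l2)) by (apply Hi; right; auto).
      apply in_app_or in H. apply in_or_app. destruct H as [H|[H|H]]; auto.
      subst; contradiction.
    + apply Permutation_sym, Permutation_middle.
Qed.

Definition ulist (L1 L2 : list T) : list T := nodup eq_dec_cl (L1 ++ L2).

Lemma ulist_NoDup L1 L2 : NoDup (ulist L1 L2).
Proof. apply NoDup_nodup. Qed.

Lemma ulist_incl_l L1 L2 : incl L1 (ulist L1 L2).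
Proof. intros x Hx. apply nodup_In. apply in_or_app; auto. Qed.

Lemma ulist_incl_r L1 L2 : incl L2 (ulist L1 L2).
Proof. intros x Hx. apply nodup_In. apply in_or_app; auto. Qed.

Lemma ulist_incl_inv L1 L2 L : incl (ulist L1 L2) L -> incl L1 L /\ incl L2 L.
Proof. intros H; split; intros x Hx; apply H; [apply ulist_incl_l|apply ulist_incl_r]; auto. Qed.

End Fsum.

Section HasSumTh.
Context {T : Type}.
Implicit Types (g h : T -> R).

Lemma HasSum_unique g s t : HasSum g s -> HasSum g t -> s = t.
Proof.
  intros Hs Ht. destruct (Req_dec s t) as [E|E]; auto. exfalso.
  set (e := Rabs (s - t) / 2).
  assert (He : 0 < e) by (unfold e; assert (s - t <> 0) by lra; pose proof (Rabs_pos_lt (s - t) H); lra).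
  destruct (Hs e He) as [L1 [N1 H1]]. destruct (Ht e He) as [L2 [N2 H2]].
  set (L := ulist L1 L2).
  specialize (H1 L (ulist_NoDup _ _) (ulist_incl_l _ _)).
  specialize (H2 L (ulist_NoDup _ _) (ulist_incl_r _ _)).
  assert (Rabs (s - t) <= Rabs (fsum g L - t) + Rabs (fsum g L - s)).
  { replace (s - t) with ((fsum g L - t) - (fsum g L - s)) by ring.
    eapply Rle_trans; [apply Rabs_triang|]. rewrite Rabs_Ropp. lra. }
  unfold e in *. lra.
Qed.

Lemma sumS_eq g s : HasSum g s -> sumS g = s.
Proof.
  intros H. unfold sumS. apply (HasSum_unique g); auto.
  apply (epsilon_spec (inhabits 0) (fun s => HasSum g s)). exists s; auto.
Qed.

Lemma sumS_spec g : Summable g -> HasSum g (sumS g).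
Proof. intros [s H]. rewrite (sumS_eq g s H); auto. Qed.

Lemma HasSum_ext g h s : (forall x, g x = h x) -> HasSum g s -> HasSum h s.
Proof.
  intros E H e He. destruct (H e He) as [L [N HL]]. exists L; split; auto.
  intros L' N' I'. rewrite <- (fsum_ext g h); auto.
Qed.

Lemma HasSum_plus g h a b : HasSum g a -> HasSum h b -> HasSum (fun x => g x + h x) (a + b).
Proof.
  intros Ha Hb e He.
  destruct (Ha (e/2) ltac:(lra)) as [L1 [N1 H1]]. destruct (Hb (e/2) ltac:(lra)) as [L2 [N2 H2]].
  exists (ulist L1 L2). split; [apply ulist_NoDup|]. intros L' N' I'.
  destruct (ulist_incl_inv _ _ _ I') as [I1 I2].
  specialize (H1 L' N' I1). specialize (H2 L' N' I2). rewrite fsum_plus.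
  replace (fsum g L' + fsum h L' - (a + b)) with ((fsum g L' - a) + (fsum h L' - b)) by ring.
  eapply Rle_lt_trans; [apply Rabs_triang|]. lra.
Qed.

Lemma HasSum_scal c g a : HasSum g a -> HasSum (fun x => c * g x) (c * a).
Proof.
  intros Ha e He. set (e' := e / (Rabs c + 1)).
  assert (He' : 0 < e') by (unfold e'; pose proof (Rabs_pos c); apply Rdiv_lt_0_compat; lra).
  destruct (Ha e' He') as [L [N HL]]. exists L; split; auto. intros L' N' I'.
  rewrite fsum_scal. replace (c * fsum g L' - c * a) with (c * (fsum g L' - a)) by ring.
  rewrite Rabs_mult. specialize (HL L' N' I').
  assert (Rabs c * Rabs (fsum g L' - a) <= Rabs c * e').
  { apply Rmult_le_compat_l; [apply Rabs_pos|lra]. }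
  assert (Rabs c * e' < e); [|lra].
  unfold e'. pose proof (Rabs_pos c).
  apply (Rmult_lt_reg_r (Rabs c + 1)); [lra|].
  field_simplify; lra.
Qed.

Lemma HasSum_minus g h a b : HasSum g a -> HasSum h b -> HasSum (fun x => g x - h x) (a - b).
Proof.
  intros Ha Hb. apply (HasSum_ext (fun x => g x + (-1) * h x)).
  - intros; ring.
  - replace (a - b) with (a + (-1) * b) by ring. apply HasSum_plus; auto. apply HasSum_scal; auto.
Qed.

Lemma HasSum_zero : HasSum (fun _ : T => 0) 0.
Proof. intros e He. exists []. split; [constructor|]. intros. rewrite fsum_const0, Rminus_0_r, Rabs_R0; auto. Qed.

Lemma HasSum_le g h a b : (forall x, g x <= h x) -> HasSum g a -> HasSum h b -> a <= b.
Proof.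
  intros Hle Ha Hb. apply Rnot_lt_le. intros Hlt. set (e := (a - b) / 2).
  destruct (Ha e ltac:(unfold e; lra)) as [L1 [N1 H1]].
  destruct (Hb e ltac:(unfold e; lra)) as [L2 [N2 H2]].
  set (L := ulist L1 L2).
  specialize (H1 L (ulist_NoDup _ _) (ulist_incl_l _ _)).
  specialize (H2 L (ulist_NoDup _ _) (ulist_incl_r _ _)).
  assert (fsum g L <= fsum h L) by (apply fsum_le; auto).
  apply Rabs_def2 in H1. apply Rabs_def2 in H2. unfold e in *. lra.
Qed.

Lemma HasSum_nonneg_le g s L : (forall x, 0 <= g x) -> HasSum g s -> NoDup L -> fsum g L <= s.
Proof.
  intros Hg Hs N. apply Rnot_lt_le. intros Hlt.
  destruct (Hs (fsum g L - s) ltac:(lra)) as [L0 [N0 H0]].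
  set (L' := ulist L0 L).
  specialize (H0 L' (ulist_NoDup _ _) (ulist_incl_l _ _)).
  assert (fsum g L <= fsum g L') by (apply fsum_incl_le; auto; apply ulist_incl_r).
  apply Rabs_def2 in H0. lra.
Qed.

Lemma HasSum_nonneg g s : (forall x, 0 <= g x) -> HasSum g s -> 0 <= s.
Proof. intros Hg Hs. apply (HasSum_nonneg_le g s []) in Hs; auto. constructor. Qed.

Lemma bounded_HasSum g M : (forall x, 0 <= g x) -> (forall L, NoDup L -> fsum g L <= M) ->
  exists s, HasSum g s /\ s <= M.
Proof.
  intros Hg HM.
  set (E := fun r => exists L, NoDup L /\ r = fsum g L).
  assert (HE : bound E) by (exists M; intros r [L [N ->]]; auto).
  assert (HE0 : exists r, E r) by (exists 0; exists []; split; [constructor|auto]).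
  destruct (completeness E HE HE0) as [s [Hub Hlub]].
  exists s. split.
  - intros e He.
    assert (exists L, NoDup L /\ s - e < fsum g L) as [L [N HL]].
    { apply NNPP. intros Hn. assert (s <= s - e); [|lra]. apply Hlub.
      intros r [L [N ->]]. apply Rnot_lt_le. intros Hl. apply Hn. exists L; auto. }
    exists L. split; auto. intros L' N' I'.
    assert (fsum g L <= fsum g L') by (apply fsum_incl_le; auto).
    assert (fsum g L' <= s) by (apply Hub; exists L'; auto).
    apply Rabs_def1; lra.
  - apply Hlub. intros r [L [N ->]]. auto.
Qed.

Lemma bounded_Summable g M : (forall x, 0 <= g x) -> (forall L, NoDup L -> fsum g L <= M) ->
  Summable g /\ sumS g <= M.
Proof.
  intros Hg HM. destruct (bounded_HasSum g M Hg HM) as [s [Hs Hle]].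
  split; [exists s; auto|]. rewrite (sumS_eq g s); auto.
Qed.

Lemma dominated_Summable g h : (forall x, Rabs (g x) <= h x) -> Summable h -> Summable g.
Proof.
  intros Hd [s Hs].
  assert (Hh : forall x, 0 <= h x) by (intros x; eapply Rle_trans; [apply Rabs_pos|apply Hd]).
  assert (Hp : exists a, HasSum (fun x => Rmax (g x) 0) a).
  { destruct (bounded_HasSum (fun x => Rmax (g x) 0) s) as [a [Ha _]].
    - intros; apply Rmax_r.
    - intros L N. eapply Rle_trans; [|apply (HasSum_nonneg_le h s L); auto].
      apply fsum_le. intros x _. specialize (Hd x). pose proof (Rle_abs (g x)) as Q1; pose proof (Rabs_Ropp (g x)) as Q2; pose proof (Rle_abs (- g x)) as Q3. apply Rmax_lub; lra.
    - exists a; auto. }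
  assert (Hm : exists a, HasSum (fun x => Rmax (- g x) 0) a).
  { destruct (bounded_HasSum (fun x => Rmax (- g x) 0) s) as [a [Ha _]].
    - intros; apply Rmax_r.
    - intros L N. eapply Rle_trans; [|apply (HasSum_nonneg_le h s L); auto].
      apply fsum_le. intros x _. specialize (Hd x). pose proof (Rle_abs (g x)) as Q1; pose proof (Rabs_Ropp (g x)) as Q2; pose proof (Rle_abs (- g x)) as Q3. apply Rmax_lub; lra.
    - exists a; auto. }
  destruct Hp as [a Ha]. destruct Hm as [b Hb].
  exists (a - b). eapply HasSum_ext; [|apply (HasSum_minus _ _ _ _ Ha Hb)].
  intros x. simpl. unfold Rmax. destruct (Rle_dec (g x) 0); destruct (Rle_dec (- g x) 0); lra.
Qed.

Lemma sumS_le g h : (forall x, g x <= h x) -> Summable g -> Summable h -> sumS g <= sumS h.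
Proof. intros H Hg Hh. apply (HasSum_le g h _ _ H (sumS_spec g Hg) (sumS_spec h Hh)). Qed.

Lemma Summable_plus g h : Summable g -> Summable h -> Summable (fun x => g x + h x) /\
  sumS (fun x => g x + h x) = sumS g + sumS h.
Proof. intros Hg Hh. pose proof (HasSum_plus _ _ _ _ (sumS_spec g Hg) (sumS_spec h Hh)) as H.
  split; [eexists; eauto|]. apply sumS_eq; auto. Qed.

Lemma Summable_scal c g : Summable g -> Summable (fun x => c * g x) /\
  sumS (fun x => c * g x) = c * sumS g.
Proof. intros Hg. pose proof (HasSum_scal c _ _ (sumS_spec g Hg)) as H.
  split; [eexists; eauto|]. apply sumS_eq; auto. Qed.

Lemma sumS_nonneg g : (forall x, 0 <= g x) -> Summable g -> 0 <= sumS g.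
Proof. intros H Hg. apply (HasSum_nonneg g); auto. apply sumS_spec; auto. Qed.

Lemma Summable_ext g h : (forall x, g x = h x) -> Summable g -> Summable h /\ sumS h = sumS g.
Proof. intros E [s Hs]. assert (HasSum h s) by (eapply HasSum_ext; eauto).
  split; [eexists; eauto|]. rewrite (sumS_eq h s), (sumS_eq g s); auto. Qed.

End HasSumTh.

Section Point.
Context {T : Type}.

Definition pt (x : T) (v : R) (y : T) : R := if eq_dec_cl y x then v else 0.

Lemma fsum_pt_out x v L : ~ In x L -> fsum (pt x v) L = 0.
Proof. induction L; simpl; intros H; auto. unfold pt at 1. destruct (eq_dec_cl a x).
  - subst; exfalso; auto.
  - rewrite IHL; auto. lra. Qed.

Lemma fsum_pt_in x v L : NoDup L -> In x L -> fsum (pt x v) L = v.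
Proof. induction 1 as [|a L Ha N IH]; simpl; intros Hi; [contradiction|].
  unfold pt at 1. destruct (eq_dec_cl a x).
  - subst. rewrite fsum_pt_out; auto. lra.
  - destruct Hi as [Hi|Hi]; [congruence|]. rewrite IH; auto. lra. Qed.

Lemma HasSum_pt x v : HasSum (pt x v) v.
Proof. intros e He. exists [x]. split; [constructor; [simpl; auto|constructor]|].
  intros L' N' I'. rewrite fsum_pt_in; auto. rewrite Rminus_diag, Rabs_R0; auto.
  apply I'; left; auto. Qed.

Lemma fsum_pt_le x v L : 0 <= v -> NoDup L -> fsum (pt x v) L <= v.
Proof. intros Hv N. destruct (classic (In x L)).
  - rewrite fsum_pt_in; auto; lra.
  - rewrite fsum_pt_out; auto. Qed.

End Point.

Section Product.
Context {T U : Type}.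

Lemma fsum_filter_split (P : T * U -> bool) (h : T * U -> R) L :
  fsum h L = fsum h (filter P L) + fsum h (filter (fun q => negb (P q)) L).
Proof. induction L; simpl; [lra|]. destruct (P a); simpl; rewrite IHL; lra. Qed.

Lemma fsum_row (h : T * U -> R) x0 L : (forall q, In q L -> fst q = x0) ->
  fsum h L = fsum (fun y => h (x0, y)) (map snd L).
Proof. induction L as [|[a b] L IH]; simpl; intros H; auto.
  rewrite IH; auto. assert (a = x0) by (apply (H (a,b)); auto). subst; auto. Qed.

Lemma NoDup_row x0 (L : list (T * U)) : NoDup L -> (forall q, In q L -> fst q = x0) -> NoDup (map snd L).
Proof. induction 1 as [|[a b] L Ha N IH]; simpl; intros H; constructor.
  - intros Hin. apply in_map_iff in Hin. destruct Hin as [[a' b'] [E Hin]]. simpl in E. subst.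
    assert (a = x0) by (apply (H (a,b)); auto). assert (a' = x0) by (apply (H (a',b)); auto).
    subst. auto.
  - apply IH; auto. Qed.

Lemma row_bound (h : T * U -> R) (r : T -> R) (R0 : R) :
  (forall q, 0 <= h q) ->
  (forall x Y, NoDup Y -> fsum (fun y => h (x, y)) Y <= r x) ->
  (forall X, NoDup X -> fsum r X <= R0) ->
  forall L, NoDup L -> fsum h L <= R0.
Proof.
  intros Hh Hr HR.
  assert (Main : forall n L, (length L <= n)%nat -> NoDup L -> forall X, NoDup X ->
     (forall q, In q L -> ~ In (fst q) X) -> fsum h L + fsum r X <= R0).
  { induction n as [|n IH]; intros L Hl N X NX HX.
    - destruct L; [simpl in *|simpl in Hl; lia]. rewrite Rplus_0_l; auto.
    - destruct L as [|p L0]; [simpl; rewrite Rplus_0_l; auto|].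
      set (x0 := fst p).
      set (P := fun q : T * U => if eq_dec_cl (fst q) x0 then true else false).
      rewrite (fsum_filter_split P).
      assert (E1 : fsum h (filter P (p :: L0)) <= r x0).
      { rewrite (fsum_row h x0).
        - apply Hr. apply NoDup_row with x0.
          + apply NoDup_filter; auto.
          + intros q Hq. apply filter_In in Hq. destruct Hq as [_ Hq]. unfold P in Hq.
            destruct (eq_dec_cl (fst q) x0); congruence.
        - intros q Hq. apply filter_In in Hq. destruct Hq as [_ Hq]. unfold P in Hq.
          destruct (eq_dec_cl (fst q) x0); congruence. }
      assert (E2 : fsum h (filter (fun q => negb (P q)) (p :: L0)) + fsum r (x0 :: X) <= R0).
      { apply IH.
        - simpl. unfold P at 1. destruct (eq_dec_cl (fst p) x0); [|unfold x0 in n0; congruence].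
          simpl. simpl in Hl. pose proof (filter_length_le (fun q => negb (P q)) L0). lia.
        - apply NoDup_filter; auto.
        - constructor; auto. apply (HX p); left; auto.
        - intros q Hq. apply filter_In in Hq. destruct Hq as [Hq Hq']. unfold P in Hq'.
          destruct (eq_dec_cl (fst q) x0); [discriminate|]. intros [E|E]; [congruence|].
          apply (HX q Hq E). }
      rewrite fsum_cons in E2. lra. }
  intros L N. specialize (Main (length L) L (le_n _) N [] (NoDup_nil _)). simpl in Main.
  assert (fsum h L + 0 <= R0) by (apply Main; auto). lra.
Qed.

Definition swap (q : T * U) : U * T := (snd q, fst q).

Lemma swap_bound (h : U * T -> R) M : (forall L, NoDup L -> fsum h L <= M) ->
  forall L : list (T * U), NoDup L -> fsum (fun q => h (swap q)) L <= M.
Proof.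
  intros H L N. assert (fsum (fun q => h (swap q)) L = fsum h (map swap L)).
  { induction L; simpl; auto. rewrite IHL; auto. inversion N; auto. }
  rewrite H0. apply H. apply FinFun.Injective_map_NoDup; auto.
  intros [a b] [c d]; unfold swap; simpl; congruence.
Qed.

End Product.

Lemma bounded_Summable_le {T : Type} (g : T -> R) (M : R) :
  (forall x, 0 <= g x) -> (forall L, NoDup L -> fsum g L <= M) -> Summable g /\ sumS g <= M.
Proof. apply bounded_Summable. Qed.

Lemma single_support_Summable {T : Type} (h : T -> R) :
  (forall x, 0 <= h x) -> (forall x y, h x <> 0 -> h y <> 0 -> x = y) -> Summable h.
Proof.
  intros H0 H1. destruct (classic (exists x, h x <> 0)) as [[x Hx]|Hn].
  - cut (forall L, NoDup L -> fsum h L <= h x).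
    { intros Hb. apply (proj1 (bounded_Summable h (h x) H0 Hb)). }
    intros L N.
    eapply Rle_trans; [|apply (fsum_pt_le x (h x) L (H0 x) N)].
    apply fsum_le. intros y _. unfold pt. destruct (eq_dec_cl y x); subst; [lra|].
    destruct (Req_dec (h y) 0); [rewrite H; lra|]. exfalso; apply n; auto.
  - exists 0. eapply HasSum_ext; [|apply HasSum_zero]. intros y. simpl.
    destruct (Req_dec (h y) 0); auto. exfalso; apply Hn; exists y; auto.
Qed.

Section Prob.
Context {S : Type} (nu : S -> R) (Hnu : prob_measure nu).

Lemma nu_nonneg x : 0 <= nu x. Proof. apply Hnu. Qed.

Lemma nu_fin L : NoDup L -> fsum nu L <= 1.
Proof. intros N. apply (HasSum_nonneg_le nu 1 L); auto; apply Hnu. Qed.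

Definition indm (A : S -> bool) (x : S) : R := if A x then nu x else 0.

Lemma ind_bounds A x : 0 <= indm A x <= nu x.
Proof. unfold indm. pose proof (nu_nonneg x). destruct (A x); lra. Qed.

Lemma meas_spec A : HasSum (indm A) (meas nu A).
Proof. unfold meas. fold (indm A). apply sumS_spec. apply (dominated_Summable _ nu).
  - intros x. pose proof (ind_bounds A x). rewrite Rabs_right; lra.
  - exists 1; apply Hnu. Qed.

Lemma meas_nonneg A : 0 <= meas nu A.
Proof. apply (HasSum_nonneg (indm A)); [intros; apply ind_bounds|apply meas_spec]. Qed.

Lemma meas_compl A : meas nu A + meas nu (fun x => negb (A x)) = 1.
Proof. apply (HasSum_unique nu).
  - eapply HasSum_ext; [|apply (HasSum_plus _ _ _ _ (meas_spec A) (meas_spec (fun x => negb (A x))))].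
    intros x; unfold indm; destruct (A x); simpl; lra.
  - apply Hnu. Qed.

Lemma meas_mono A B : (forall x, A x = true -> B x = true) -> meas nu A <= meas nu B.
Proof. intros H. apply (HasSum_le (indm A) (indm B)); try apply meas_spec.
  intros x; unfold indm. specialize (H x). pose proof (nu_nonneg x).
  destruct (A x); [rewrite H; auto; lra|destruct (B x); lra]. Qed.

Lemma meas_ge_fsum A L : NoDup L -> fsum (indm A) L <= meas nu A.
Proof. intros N. apply HasSum_nonneg_le; auto. intros; apply ind_bounds. apply meas_spec. Qed.

Lemma meas_pt x : meas nu (fun y => if eq_dec_cl y x then true else false) = nu x.
Proof. apply (HasSum_unique (indm (fun y => if eq_dec_cl y x then true else false))).
  - apply meas_spec.
  - eapply HasSum_ext; [|apply (HasSum_pt x (nu x))]. intros y. unfold pt, indm.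
    destruct (eq_dec_cl y x); subst; auto. Qed.

Lemma meas_le1 A : meas nu A <= 1.
Proof. pose proof (meas_compl A). pose proof (meas_nonneg (fun x => negb (A x))). lra. Qed.

End Prob.

Section Model.
Context {S : Type} (p : S -> S -> R) (mu : S -> R)
  (Hp : stochastic p) (Hmu : prob_measure mu) (Hrev : reversible p mu).

Lemma p_nonneg x y : 0 <= p x y. Proof. apply Hp. Qed.
Lemma mu_nonneg x : 0 <= mu x. Proof. apply Hmu. Qed.

Lemma p_row x Y : NoDup Y -> fsum (p x) Y <= 1.
Proof. intros N. apply (HasSum_nonneg_le (p x) 1 Y); auto. apply Hp. apply Hp. Qed.

Lemma dir_term_nonneg f q : 0 <= dir_term p mu f q.
Proof. unfold dir_term. pose proof (mu_nonneg (fst q)). pose proof (p_nonneg (fst q) (snd q)).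
  pose proof (pow2_ge_0 (f (fst q) - f (snd q))).
  apply Rmult_le_pos; [|auto]. apply Rmult_le_pos; [|auto]. apply Rmult_le_pos; lra. Qed.

Lemma rowswap_bound (h : S * S -> R) (r : S -> R) M :
  (forall q, 0 <= h q) ->
  (forall x Y, NoDup Y -> fsum (fun y => h (x, y)) Y <= r x) ->
  (forall X, NoDup X -> fsum r X <= M) ->
  forall (k : S * S -> R), (forall q, 0 <= k q) -> (forall q, k q <= h q + h (swap q)) ->
  Summable k /\ sumS k <= 2 * M.
Proof.
  intros Hh Hr HM k Hk Hkb. apply bounded_Summable; auto. intros L N.
  eapply Rle_trans; [apply (fsum_le _ (fun q => h q + h (swap q))); intros; apply Hkb|].
  rewrite fsum_plus.
  pose proof (row_bound h r M Hh Hr HM L N).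
  pose proof (swap_bound h M (row_bound h r M Hh Hr HM) L N). lra.
Qed.

Lemma mu_row (c : S -> R) x Y : 0 <= c x -> NoDup Y ->
  fsum (fun y => mu x * p x y * c x) Y <= mu x * c x.
Proof. intros Hc N. rewrite (fsum_ext _ (fun y => (mu x * c x) * p x y)) by (intros; ring).
  rewrite fsum_scal. pose proof (p_row x Y N). pose proof (mu_nonneg x).
  assert (0 <= mu x * c x) by (apply Rmult_le_pos; auto).
  rewrite <- (Rmult_1_r (mu x * c x)) at 2. apply Rmult_le_compat_l; auto. Qed.

Lemma dir_Summable f : l2 mu f ->
  Summable (dir_term p mu f) /\ dirichlet p mu f <= 2 * sumS (fun x => mu x * f x ^ 2).
Proof.
  intros Hf. unfold dirichlet.
  apply (rowswap_bound (fun q => mu (fst q) * p (fst q) (snd q) * f (fst q) ^ 2)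
    (fun x => mu x * f x ^ 2)).
  - intros q. pose proof (mu_nonneg (fst q)). pose proof (p_nonneg (fst q) (snd q)).
    pose proof (pow2_ge_0 (f (fst q))). apply Rmult_le_pos; auto. apply Rmult_le_pos; auto.
  - intros x Y N. cbn [fst snd]. apply (mu_row (fun z => f z ^ 2)); auto. apply pow2_ge_0.
  - intros X N. apply HasSum_nonneg_le; auto.
    + intros x. apply Rmult_le_pos; [apply mu_nonneg|apply pow2_ge_0].
    + apply sumS_spec; auto.
  - apply dir_term_nonneg.
  - intros [x y]. unfold dir_term, swap; cbn [fst snd]. rewrite (Hrev y x).
    pose proof (mu_nonneg x). pose proof (p_nonneg x y).
    assert (0 <= mu x * p x y) by (apply Rmult_le_pos; auto).
    assert (Hq : (f x - f y) ^ 2 <= 2 * f x ^ 2 + 2 * f y ^ 2) by (pose proof (pow2_ge_0 (f x + f y)); nra).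
    apply Rmult_le_compat_l with (r := / 2 * mu x * p x y) in Hq; [|nra]. nra.
Qed.

Lemma bounded_l2 u K : (forall x, Rabs (u x) <= K) -> l2 mu u.
Proof. intros H. unfold l2. apply (dominated_Summable _ (fun x => K ^ 2 * mu x)).
  - intros x. pose proof (mu_nonneg x). pose proof (H x). pose proof (Rabs_pos (u x)).
    rewrite Rabs_right.
    + assert (u x ^ 2 <= K ^ 2).
      { rewrite <- (pow2_abs (u x)). apply pow_incr; lra. }
      nra.
    + apply Rle_ge, Rmult_le_pos; auto. apply pow2_ge_0.
  - apply (Summable_scal (K ^ 2) mu). exists 1; apply Hmu. Qed.

Lemma dirichlet_nonneg f : l2 mu f -> 0 <= dirichlet p mu f.
Proof. intros Hf. apply sumS_nonneg; [apply dir_term_nonneg|apply dir_Summable; auto]. Qed.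

Lemma cap_empty A B : (forall x, A x = false) -> cap p mu A B = 0.
Proof.
  intros HA. unfold cap.
  destruct (epsilon_spec (inhabits 0) (fun c => ((forall x, A x = false) /\ c = 0) \/
    (~ (forall x, A x = false) /\ is_inf (cap_energies p mu A B) c))) as [[_ H]|[H _]].
  - exists 0; left; auto.
  - auto.
  - contradiction.
Qed.

Lemma cap_is_inf A B : (exists x, A x = true) -> (exists e, cap_energies p mu A B e) ->
  is_inf (cap_energies p mu A B) (cap p mu A B).
Proof.
  intros [x0 Hx0] [e0 He0].
  assert (Hne : ~ (forall x, A x = false)) by (intros H; rewrite H in Hx0; discriminate).
  assert (Hex : exists c, is_inf (cap_energies p mu A B) c).
  { set (E := fun r => cap_energies p mu A B (- r)).
    assert (HE : bound E).
    { exists 0. intros r Hr. destruct Hr as [g [_ [_ Hg]]].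
      pose proof (HasSum_nonneg _ _ (dir_term_nonneg g) Hg). lra. }
    assert (HE0 : exists r, E r) by (exists (- e0); unfold E; rewrite Ropp_involutive; auto).
    destruct (completeness E HE HE0) as [s [Hub Hlub]].
    exists (- s). split.
    - intros e He. assert (- e <= s) by (apply Hub; unfold E; rewrite Ropp_involutive; auto). lra.
    - intros b Hb. assert (s <= - b); [|lra]. apply Hlub. intros r Hr. specialize (Hb _ Hr). lra. }
  unfold cap.
  destruct (epsilon_spec (inhabits 0) (fun c => ((forall x, A x = false) /\ c = 0) \/
    (~ (forall x, A x = false) /\ is_inf (cap_energies p mu A B) c))) as [[H _]|[_ H]].
  - destruct Hex as [c Hc]. exists c; right; auto.
  - contradiction.
  - auto.
Qed.

Lemma cap_le_energy A B g : (forall x, A x = true -> g x = 1) -> (forall x, B x = true -> g x = 0) ->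
  Summable (dir_term p mu g) -> cap p mu A B <= sumS (dir_term p mu g).
Proof.
  intros H1 H0 Hs. destruct (classic (exists x, A x = true)) as [Hx|Hn].
  - apply (cap_is_inf A B Hx).
    + exists (sumS (dir_term p mu g)). exists g. repeat split; auto. apply sumS_spec; auto.
    + exists g. repeat split; auto. apply sumS_spec; auto.
  - rewrite cap_empty. apply sumS_nonneg; auto. apply dir_term_nonneg.
    intros x. destruct (A x) eqn:E; auto. exfalso; apply Hn; exists x; auto.
Qed.

End Model.

Definition psi (t x : R) : R := Rmin 1 (x ^ 2 / t ^ 2).

Lemma psi_eq t x : 0 < t -> 0 <= x -> psi t x = (Rmin t x) ^ 2 / t ^ 2.
Proof.
  intros Ht Hx. unfold psi. assert (0 < t ^ 2) by (apply pow_lt; auto).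
  destruct (Rle_dec x t).
  - rewrite (Rmin_right t x) by auto. apply Rmin_right.
    apply (Rmult_le_reg_r (t ^ 2)); auto. unfold Rdiv. rewrite Rmult_assoc, Rinv_l by lra.
    rewrite Rmult_1_r, Rmult_1_l. apply pow_incr; lra.
  - rewrite (Rmin_left t x) by lra. rewrite Rmin_left.
    + field. lra.
    + apply (Rmult_le_reg_r (t ^ 2)); auto. unfold Rdiv. rewrite Rmult_assoc, Rinv_l by lra.
      rewrite Rmult_1_r, Rmult_1_l. apply pow_incr; lra.
Qed.

Lemma psi_bounds t x : 0 < t -> 0 <= psi t x <= 1.
Proof. intros Ht. unfold psi. split; [|apply Rmin_l].
  apply Rmin_glb; [lra|]. apply Rmult_le_pos; [apply pow2_ge_0|].
  apply Rlt_le, Rinv_0_lt_compat, pow_lt; auto. Qed.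

Lemma step1 t a b : 0 < t -> 0 <= a <= b ->
  t ^ 4 * (psi t b - psi t a) ^ 2 <= 4 / 3 * (b - a) * ((Rmin t b) ^ 3 - (Rmin t a) ^ 3).
Proof.
  intros Ht Hab. rewrite !psi_eq by lra.
  set (A := Rmin t a). set (B := Rmin t b).
  assert (HA : 0 <= A <= B).
  { unfold A, B, Rmin. destruct (Rle_dec t a); destruct (Rle_dec t b); lra. }
  assert (HBA : B - A <= b - a).
  { unfold A, B, Rmin. destruct (Rle_dec t a); destruct (Rle_dec t b); lra. }
  assert (E : t ^ 4 * (B ^ 2 / t ^ 2 - A ^ 2 / t ^ 2) ^ 2 = (B ^ 2 - A ^ 2) ^ 2).
  { field. lra. }
  rewrite E.
  assert (H1 : (B ^ 2 - A ^ 2) ^ 2 <= 4 / 3 * (B - A) * (B ^ 3 - A ^ 3)).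
  { pose proof (pow2_ge_0 ((B - A) ^ 2)).
    assert (4 / 3 * (B - A) * (B ^ 3 - A ^ 3) - (B ^ 2 - A ^ 2) ^ 2 = / 3 * ((B - A) ^ 2) ^ 2) by field.
    lra. }
  assert (H2 : 0 <= B ^ 3 - A ^ 3).
  { assert (B ^ 3 - A ^ 3 = (B - A) * (B ^ 2 + A * B + A ^ 2)) by ring.
    assert (0 <= B ^ 2 + A * B + A ^ 2) by nra. nra. }
  assert (0 <= 4 / 3 * (B ^ 3 - A ^ 3)) by lra.
  assert (4 / 3 * (B - A) * (B ^ 3 - A ^ 3) <= 4 / 3 * (b - a) * (B ^ 3 - A ^ 3)) by nra.
  lra.
Qed.

Section Levels.
Variables (rho c : R).
Hypothesis Hrho : 1 < rho.
Hypothesis Hc : 0 < c.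

Definition lvl (k : nat) : R := c * rho ^ k.

Lemma tl_pos k : 0 < lvl k.
Proof. unfold lvl. apply Rmult_lt_0_compat; auto. apply pow_lt; lra. Qed.

Lemma tl_mono k l : (k <= l)%nat -> lvl k <= lvl l.
Proof. intros H. unfold lvl. apply Rmult_le_compat_l; [lra|]. apply Rle_pow; auto; lra. Qed.

Lemma tl_S k : lvl (S k) = rho * lvl k.
Proof. unfold lvl. simpl. ring. Qed.

Definition Hk (k : nat) (x : R) : R := (rho ^ 2 - 1) * (Rmin (lvl k) x) ^ 3 / (lvl k) ^ 2.
Definition Hs (n : nat) (x : R) : R := sum_f_R0 (fun k => Hk k x) n.

Definition Gs (j n : nat) : R :=
  sum_f_R0 (fun k => if le_dec j k then (rho ^ 2 - 1) * lvl j ^ 2 / lvl k ^ 2 else 0) n.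

Lemma Gs_val j n : ((n < j)%nat -> Gs j n = 0) /\
  ((j <= n)%nat -> Gs j n = rho ^ 2 - rho ^ 2 * lvl j ^ 2 / lvl (S n) ^ 2).
Proof.
  pose proof (tl_pos j) as Pj.
  induction n as [|n IH].
  - unfold Gs. simpl. destruct (le_dec j 0).
    + split; [lia|]. intros _. assert (j = 0%nat) by lia. subst. rewrite tl_S. field. split; lra.
    + split; auto. lia.
  - unfold Gs in *. rewrite tech5. destruct IH as [IH1 IH2].
    destruct (le_dec j (S n)).
    + split; [lia|]. intros _. destruct (le_dec j n).
      * rewrite IH2 by auto. pose proof (tl_pos (S n)). rewrite (tl_S (S n)). field. split; lra.
      * assert (j = S n) by lia. subst. rewrite IH1 by lia. rewrite (tl_S (S n)). field. split; lra.
    + split; [|lia]. intros _. rewrite IH1 by lia. lra.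
Qed.

Lemma Gs_le j n : Gs j n <= rho ^ 2.
Proof.
  destruct (Gs_val j n) as [H1 H2]. destruct (le_lt_dec j n).
  - rewrite H2 by auto. pose proof (tl_pos j). pose proof (tl_pos (S n)).
    assert (0 <= rho ^ 2 * lvl j ^ 2 / lvl (S n) ^ 2).
    { apply Rmult_le_pos; [apply Rmult_le_pos; [apply pow2_ge_0|apply pow2_ge_0]|].
      apply Rlt_le, Rinv_0_lt_compat, pow_lt; auto. }
    lra.
  - rewrite H1 by auto. pose proof (pow2_ge_0 rho). lra.
Qed.

Lemma Hk_const k a b : lvl k <= a -> lvl k <= b -> Hk k b - Hk k a = 0.
Proof. intros Ha Hb. unfold Hk. rewrite (Rmin_left _ a), (Rmin_left _ b) by auto. ring. Qed.

Lemma Hs_diff n a b : Hs n b - Hs n a = sum_f_R0 (fun k => Hk k b - Hk k a) n.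
Proof. unfold Hs. rewrite minus_sum. auto. Qed.

Lemma piece n j a b : (j <= n)%nat -> 0 <= a <= b -> b <= lvl j ->
  (j = 0%nat \/ (exists j', j = S j' /\ lvl j' <= a)) ->
  Hs n b - Hs n a <= 3 * rho ^ 2 * (b - a).
Proof.
  intros Hjn Hab Hb Hlo. rewrite Hs_diff.
  eapply Rle_trans with (sum_f_R0 (fun k => (if le_dec j k then (rho ^ 2 - 1) * lvl j ^ 2 / lvl k ^ 2 else 0) * (3 * (b - a))) n).
  - apply sum_Rle. intros k Hk0. destruct (le_dec j k).
    + pose proof (tl_mono j k l). pose proof (tl_pos k). pose proof (tl_pos j).
      unfold Hk. rewrite (Rmin_right _ a), (Rmin_right _ b) by lra.
      assert (E : (rho ^ 2 - 1) * b ^ 3 / lvl k ^ 2 - (rho ^ 2 - 1) * a ^ 3 / lvl k ^ 2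
        = ((rho ^ 2 - 1) / lvl k ^ 2) * (b ^ 3 - a ^ 3)) by (field; lra).
      assert (E2 : (rho ^ 2 - 1) * lvl j ^ 2 / lvl k ^ 2 * (3 * (b - a))
        = ((rho ^ 2 - 1) / lvl k ^ 2) * (3 * lvl j ^ 2 * (b - a))) by (field; lra).
      rewrite E, E2. apply Rmult_le_compat_l.
      * assert (0 < rho ^ 2 - 1) by nra. apply Rlt_le, Rdiv_lt_0_compat; auto. apply pow_lt; auto.
      * assert (b ^ 3 - a ^ 3 <= 3 * b ^ 2 * (b - a)).
        { assert (3 * b ^ 2 * (b - a) - (b ^ 3 - a ^ 3) = (b - a) * ((b - a) * (2 * b + a))) by ring.
          assert (0 <= (b - a) * (2 * b + a)) by nra. nra. }
        assert (b ^ 2 <= lvl j ^ 2) by (apply pow_incr; lra).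
        assert (3 * b ^ 2 * (b - a) <= 3 * lvl j ^ 2 * (b - a)) by nra. lra.
    + destruct Hlo as [Hj0|[j' [Ej Hj']]]; [lia|].
      assert (lvl k <= lvl j') by (apply tl_mono; lia).
      rewrite Hk_const by lra. lra.
  - rewrite <- scal_sum. fold (Gs j n). pose proof (Gs_le j n). rewrite Rmult_comm.
    assert (0 <= 3 * (b - a)) by lra. nra.
Qed.

Lemma last_piece n a b : lvl n <= a <= b -> Hs n b - Hs n a <= 3 * rho ^ 2 * (b - a).
Proof.
  intros H. rewrite Hs_diff. rewrite sum_eq_R0.
  - pose proof (pow2_ge_0 rho). nra.
  - intros k Hk0. assert (lvl k <= lvl n) by (apply tl_mono; auto). apply Hk_const; lra.
Qed.

Lemma lipH n a b : 0 <= a <= b -> Hs n b - Hs n a <= 3 * rho ^ 2 * (b - a).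
Proof.
  assert (Glue : forall j, (j <= n)%nat -> forall a b, 0 <= a <= b -> b <= lvl j ->
     Hs n b - Hs n a <= 3 * rho ^ 2 * (b - a)).
  { induction j as [|j IH]; intros Hj a0 b0 Hab Hb.
    - apply (piece n 0); auto.
    - destruct (Rle_dec b0 (lvl j)).
      + apply IH; auto; lia.
      + destruct (Rle_dec (lvl j) a0).
        * apply (piece n (S j)); auto. right. exists j; auto.
        * assert (0 <= lvl j) by (pose proof (tl_pos j); lra).
          pose proof (IH ltac:(lia) a0 (lvl j) ltac:(lra) ltac:(lra)).
          pose proof (piece n (S j) (lvl j) b0 Hj ltac:(lra) Hb ltac:(right; exists j; split; auto; lra)).
          lra. }
  intros Hab. destruct (Rle_dec b (lvl n)).
  - apply (Glue n); auto.
  - destruct (Rle_dec (lvl n) a).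
    + apply last_piece; lra.
    + pose proof (tl_pos n).
      pose proof (Glue n (le_n _) a (lvl n) ltac:(lra) ltac:(lra)).
      pose proof (last_piece n (lvl n) b ltac:(lra)). lra.
Qed.

Definition wk (k : nat) : R := (rho ^ 2 - 1) * lvl k ^ 2.

Lemma edge_ineq_le n a b : 0 <= a <= b ->
  sum_f_R0 (fun k => wk k * (psi (lvl k) b - psi (lvl k) a) ^ 2) n <= 4 * rho ^ 2 * (b - a) ^ 2.
Proof.
  intros Hab.
  apply Rle_trans with (sum_f_R0 (fun k => (Hk k b - Hk k a) * (4 / 3 * (b - a))) n).
  - apply sum_Rle. intros k _. pose proof (tl_pos k) as Pk.
    pose proof (step1 (lvl k) a b Pk Hab) as S1.
    assert (Hr : 0 < rho ^ 2 - 1) by nra.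
    assert (E : (Hk k b - Hk k a) * (4 / 3 * (b - a)) =
       ((rho ^ 2 - 1) / lvl k ^ 2) * (4 / 3 * (b - a) * (Rmin (lvl k) b ^ 3 - Rmin (lvl k) a ^ 3))).
    { unfold Hk. field. lra. }
    assert (E2 : wk k * (psi (lvl k) b - psi (lvl k) a) ^ 2 =
       ((rho ^ 2 - 1) / lvl k ^ 2) * (lvl k ^ 4 * (psi (lvl k) b - psi (lvl k) a) ^ 2)).
    { unfold wk. field. lra. }
    rewrite E, E2. apply Rmult_le_compat_l; auto.
    apply Rlt_le, Rdiv_lt_0_compat; auto. apply pow_lt; auto.
  - rewrite <- scal_sum. rewrite <- Hs_diff.
    pose proof (lipH n a b Hab). assert (0 <= 4 / 3 * (b - a)) by lra.
    apply Rle_trans with (4 / 3 * (b - a) * (3 * rho ^ 2 * (b - a))).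
    + apply Rmult_le_compat_l; auto.
    + right; field.
Qed.

Lemma edge_ineq n a b : 0 <= a -> 0 <= b ->
  sum_f_R0 (fun k => wk k * (psi (lvl k) a - psi (lvl k) b) ^ 2) n <= 4 * rho ^ 2 * (a - b) ^ 2.
Proof.
  intros Ha Hb. destruct (Rle_dec b a).
  - apply edge_ineq_le; lra.
  - rewrite (sum_eq _ (fun k => wk k * (psi (lvl k) b - psi (lvl k) a) ^ 2)).
    + replace ((a - b) ^ 2) with ((b - a) ^ 2) by ring. apply edge_ineq_le; lra.
    + intros; ring.
Qed.

Definition lay (n : nat) (y : R) : R :=
  sum_f_R0 (fun k => wk k * (if Rlt_dec (lvl k) y then 1 else 0)) n.

Lemma lay_all n y : lvl n < y -> lay n y = lvl (S n) ^ 2 - c ^ 2.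
Proof.
  induction n as [|n IH]; intros Hy.
  - unfold lay. simpl. destruct (Rlt_dec (lvl 0) y); [|lra]. unfold wk. rewrite tl_S. unfold lvl. simpl. ring.
  - unfold lay in *. rewrite tech5. rewrite IH.
    + destruct (Rlt_dec (lvl (S n)) y); [|lra]. unfold wk. rewrite (tl_S (S n)). ring.
    + pose proof (tl_mono n (S n) (le_S _ _ (le_n _))). lra.
Qed.

Lemma lay_nonneg n y : 0 <= lay n y.
Proof. unfold lay. induction n; simpl.
  - unfold wk. assert (0 < rho ^ 2 - 1) by nra. pose proof (pow2_ge_0 (lvl 0)).
    destruct (Rlt_dec (lvl 0) y); nra.
  - unfold wk in *. assert (0 < rho ^ 2 - 1) by nra. pose proof (pow2_ge_0 (lvl (S n))).
    destruct (Rlt_dec (lvl (S n)) y); nra.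
Qed.

Lemma lay_bound n y : 0 <= y <= lvl (S n) -> y ^ 2 <= lay n y + c ^ 2.
Proof.
  induction n as [|n IH]; intros Hy.
  - destruct (Rlt_dec (lvl 0) y).
    + rewrite lay_all by auto. assert (y ^ 2 <= lvl 1 ^ 2) by (apply pow_incr; lra). lra.
    + pose proof (lay_nonneg 0 y). unfold lvl in n. simpl in n.
      assert (y ^ 2 <= c ^ 2) by (apply pow_incr; lra). lra.
  - destruct (Rlt_dec (lvl (S n)) y).
    + rewrite lay_all by auto. assert (y ^ 2 <= lvl (S (S n)) ^ 2) by (apply pow_incr; lra). lra.
    + assert (lay n y <= lay (S n) y).
      { unfold lay. rewrite tech5. destruct (Rlt_dec (lvl (S n)) y); [lra|]. lra. }
      pose proof (IH ltac:(lra)). lra.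
Qed.

End Levels.

Definition maxL {T : Type} (g : T -> R) (L : list T) : R := fold_right (fun x acc => Rmax (g x) acc) 0 L.

Lemma maxL_ge {T : Type} (g : T -> R) L x : In x L -> g x <= maxL g L.
Proof. induction L; simpl; intros H; [contradiction|]. destruct H as [<-|H].
  - apply Rmax_l.
  - eapply Rle_trans; [apply IHL; auto|apply Rmax_r]. Qed.

Lemma fsum_sumf {T : Type} (F : nat -> T -> R) n L :
  fsum (fun x => sum_f_R0 (fun k => F k x) n) L = sum_f_R0 (fun k => fsum (F k) L) n.
Proof. induction n; simpl; auto. rewrite <- IHn. rewrite <- fsum_plus. auto. Qed.

Lemma HasSum_sumf {T : Type} (F : nat -> T -> R) (a : nat -> R) n :
  (forall k, HasSum (F k) (a k)) -> HasSum (fun x => sum_f_R0 (fun k => F k x) n) (sum_f_R0 a n).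
Proof. intros H. induction n; simpl; auto. apply HasSum_plus; auto. Qed.

Lemma pow_unbounded rho c y : 1 < rho -> 0 < c -> exists n, y <= lvl rho c (S n).
Proof.
  intros Hr Hc. destruct (Pow_x_infinity rho ltac:(rewrite Rabs_right; lra) (y / c)) as [N HN].
  exists N. specialize (HN (S N) ltac:(lia)). rewrite Rabs_right in HN.
  2:{ apply Rle_ge, pow_le; lra. }
  unfold lvl. apply (Rmult_le_reg_r (/ c)). { apply Rinv_0_lt_compat; auto. }
  replace (c * rho ^ S N * / c) with (rho ^ S N) by (field; lra). unfold Rdiv in HN. lra.
Qed.

Section OneSide.
Context {St : Type} (p : St -> St -> R) (mu nu : St -> R)
  (Hp : stochastic p) (Hmu : prob_measure mu) (Hrev : reversible p mu) (Hnu : prob_measure nu)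
  (Cvar : R) (HC : 0 <= Cvar) (Hcv : cond_var p mu nu Cvar).

Lemma one_side_approx (g : St -> R) (B : St -> bool) (rho eps : R) :
  (forall x, 0 <= g x) -> l2 mu g -> Summable (fun x => nu x * g x ^ 2) ->
  (forall x, B x = true -> g x = 0) -> / 2 <= meas nu B ->
  (forall t, 0 < t -> meas nu (fun x => if Rlt_dec t (g x) then true else false) <= / 2) ->
  1 < rho -> 0 < eps ->
  sumS (fun x => nu x * g x ^ 2) <= 4 * rho ^ 2 * (Cvar * dirichlet p mu g) + eps.
Proof.
  intros Hg0 Hg2 Hgn HB HmB HA Hrho Heps.
  set (M2 := sumS (fun x => nu x * g x ^ 2)).
  destruct (sumS_spec _ Hgn (eps / 2) ltac:(lra)) as [L [NL HL]].
  specialize (HL L NL (incl_refl _)). apply Rabs_def2 in HL. fold M2 in HL.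
  set (c := Rmin 1 (eps / 2)).
  assert (Hc : 0 < c) by (unfold c; apply Rmin_glb_lt; lra).
  assert (Hc2 : c ^ 2 <= eps / 2).
  { assert (c <= 1) by apply Rmin_l. assert (c <= eps / 2) by apply Rmin_r. nra. }
  destruct (pow_unbounded rho c (maxL g L) Hrho Hc) as [n Hn].
  set (Ak := fun k x => if Rlt_dec (lvl rho c k) (g x) then true else false).
  set (uk := fun k x => psi (lvl rho c k) (g x)).
  assert (Hw : forall k, 0 <= wk rho c k).
  { intros k. unfold wk. assert (0 < rho ^ 2 - 1) by nra. pose proof (pow2_ge_0 (lvl rho c k)). nra. }
  assert (S1 : fsum (fun x => nu x * g x ^ 2) L <=
     sum_f_R0 (fun k => wk rho c k * fsum (indm nu (Ak k)) L) n + c ^ 2).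
  { apply Rle_trans with (fsum (fun x => sum_f_R0 (fun k => wk rho c k * indm nu (Ak k) x) n + c ^ 2 * nu x) L).
    - apply fsum_le. intros x Hx.
      assert (E : sum_f_R0 (fun k => wk rho c k * indm nu (Ak k) x) n = nu x * lay rho c n (g x)).
      { unfold lay. rewrite scal_sum. apply sum_eq. intros k _. unfold indm, Ak.
        destruct (Rlt_dec (lvl rho c k) (g x)); ring. }
      rewrite E. pose proof (lay_bound rho c Hrho Hc n (g x)) as LB.
      assert (g x <= lvl rho c (S n)) by (pose proof (maxL_ge g L x Hx); lra).
      specialize (LB (conj (Hg0 x) H)). pose proof (nu_nonneg nu Hnu x). nra.
    - rewrite fsum_plus, fsum_scal, fsum_sumf.
      rewrite (sum_eq _ (fun k => wk rho c k * fsum (indm nu (Ak k)) L)).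
      + pose proof (nu_fin nu Hnu L NL). pose proof (pow2_ge_0 c). nra.
      + intros k _. rewrite fsum_scal. auto. }
  assert (Hu : forall k, l2 mu (uk k)).
  { intros k. apply (bounded_l2 mu Hmu _ 1). intros x. unfold uk.
    pose proof (psi_bounds (lvl rho c k) (g x) (tl_pos rho c Hrho Hc k)). rewrite Rabs_right; lra. }
  assert (S2 : forall k, meas nu (Ak k) <= Cvar * dirichlet p mu (uk k)).
  { intros k. pose proof (tl_pos rho c Hrho Hc k) as Pk.
    eapply Rle_trans; [apply (Hcv (Ak k) B)|].
    - intros x Hx. unfold Ak in Hx. destruct (Rlt_dec (lvl rho c k) (g x)); [|discriminate].
      destruct (B x) eqn:EB; auto. rewrite (HB x EB) in r. exfalso; lra.
    - apply HA; auto.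
    - auto.
    - apply Rmult_le_compat_l; auto. apply cap_le_energy; auto.
      + intros x Hx. unfold Ak in Hx. destruct (Rlt_dec (lvl rho c k) (g x)); [|discriminate].
        unfold uk, psi. apply Rmin_left.
        apply (Rmult_le_reg_r (lvl rho c k ^ 2)); [apply pow_lt; auto|].
        unfold Rdiv. rewrite Rmult_assoc, Rinv_l by (apply pow_nonzero; lra).
        rewrite Rmult_1_l, Rmult_1_r. apply pow_incr; lra.
      + intros x Hx. unfold uk, psi. rewrite (HB x Hx).
        replace (0 ^ 2 / lvl rho c k ^ 2) with 0 by (field; lra). apply Rmin_right; lra.
      + apply (dir_Summable p mu Hp Hmu Hrev); auto. }
  assert (S3 : sum_f_R0 (fun k => wk rho c k * dirichlet p mu (uk k)) n <= 4 * rho ^ 2 * dirichlet p mu g).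
  { apply (HasSum_le (fun q => sum_f_R0 (fun k => wk rho c k * dir_term p mu (uk k) q) n)
                     (fun q => 4 * rho ^ 2 * dir_term p mu g q)).
    - intros [x y]. unfold dir_term. cbn [fst snd].
      rewrite (sum_eq _ (fun k => (wk rho c k * (psi (lvl rho c k) (g x) - psi (lvl rho c k) (g y)) ^ 2) * (/ 2 * mu x * p x y))).
      2:{ intros k _. unfold uk. ring. }
      rewrite <- scal_sum.
      pose proof (edge_ineq rho c Hrho Hc n (g x) (g y) (Hg0 x) (Hg0 y)).
      pose proof (mu_nonneg mu Hmu x). pose proof (p_nonneg p Hp x y).
      assert (0 <= / 2 * mu x * p x y) by (apply Rmult_le_pos; [apply Rmult_le_pos|]; lra).
      apply Rle_trans with (/ 2 * mu x * p x y * (4 * rho ^ 2 * (g x - g y) ^ 2)).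
      + apply Rmult_le_compat_l; auto.
      + right; ring.
    - apply HasSum_sumf. intros k. apply HasSum_scal. apply sumS_spec.
      apply (dir_Summable p mu Hp Hmu Hrev); auto.
    - apply HasSum_scal. apply sumS_spec. apply (dir_Summable p mu Hp Hmu Hrev); auto. }
  assert (S4 : sum_f_R0 (fun k => wk rho c k * fsum (indm nu (Ak k)) L) n <=
               Cvar * sum_f_R0 (fun k => wk rho c k * dirichlet p mu (uk k)) n).
  { rewrite scal_sum. apply sum_Rle. intros k _.
    pose proof (meas_ge_fsum nu Hnu (Ak k) L NL). pose proof (S2 k). pose proof (Hw k).
    apply Rle_trans with (wk rho c k * (Cvar * dirichlet p mu (uk k))).
    - apply Rmult_le_compat_l; auto. lra.
    - right; ring. }
  assert (Cvar * sum_f_R0 (fun k => wk rho c k * dirichlet p mu (uk k)) n <= Cvar * (4 * rho ^ 2 * dirichlet p mu g))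
    by (apply Rmult_le_compat_l; auto).
  fold M2. lra.
Qed.

Lemma one_side (g : St -> R) (B : St -> bool) :
  (forall x, 0 <= g x) -> l2 mu g -> Summable (fun x => nu x * g x ^ 2) ->
  (forall x, B x = true -> g x = 0) -> / 2 <= meas nu B ->
  (forall t, 0 < t -> meas nu (fun x => if Rlt_dec t (g x) then true else false) <= / 2) ->
  sumS (fun x => nu x * g x ^ 2) <= 4 * (Cvar * dirichlet p mu g).
Proof.
  intros H1 H2 H3 H4 H5 H6.
  set (X := sumS (fun x => nu x * g x ^ 2)). set (Y := Cvar * dirichlet p mu g).
  assert (HY : 0 <= Y) by (apply Rmult_le_pos; auto; apply (dirichlet_nonneg p mu Hp Hmu Hrev); auto).
  apply Rnot_lt_le. intros Hlt. set (d := X - 4 * Y).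
  set (eta := Rmin 1 (d / (24 * Y + 1))).
  assert (Heta : 0 < eta) by (unfold eta; apply Rmin_glb_lt; [lra|apply Rdiv_lt_0_compat; unfold d; lra]).
  assert (Heta1 : eta <= 1) by apply Rmin_l.
  assert (Heta2 : eta * (24 * Y + 1) <= d).
  { assert (eta <= d / (24 * Y + 1)) by apply Rmin_r.
    apply Rmult_le_compat_r with (r := 24 * Y + 1) in H; [|lra].
    unfold Rdiv in H. rewrite Rmult_assoc, Rinv_l in H by lra. lra. }
  pose proof (one_side_approx g B (1 + eta) (d / 4) H1 H2 H3 H4 H5 H6 ltac:(lra) ltac:(unfold d; lra)).
  fold X Y in H.
  assert ((1 + eta) ^ 2 <= 1 + 3 * eta) by nra.
  assert (4 * (1 + eta) ^ 2 * Y <= 4 * Y + 12 * eta * Y) by nra.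
  assert (12 * eta * Y <= d / 2) by nra.
  unfold d in *. lra.
Qed.

End OneSide.

Section NuFacts.
Context {St : Type} (nu : St -> R) (Hnu : prob_measure nu).

Lemma nu_f_Summable f : Summable (fun x => nu x * f x ^ 2) -> Summable (fun x => nu x * f x).
Proof.
  intros H. apply (dominated_Summable _ (fun x => nu x + nu x * f x ^ 2)).
  - intros x. pose proof (nu_nonneg nu Hnu x). rewrite Rabs_mult, (Rabs_right (nu x)) by lra.
    assert (Rabs (f x) <= 1 + f x ^ 2).
    { rewrite <- (pow2_abs (f x)). pose proof (Rabs_pos (f x)). nra. }
    nra.
  - apply Summable_plus; auto. exists 1; apply Hnu.
Qed.

Lemma var_identity f c : Summable (fun x => nu x * f x ^ 2) ->
  HasSum (fun x => nu x * (f x - c) ^ 2) (variance nu f + (sumS (fun x => nu x * f x) - c) ^ 2).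
Proof.
  intros H2. pose proof (nu_f_Summable f H2) as H1.
  set (M2 := sumS (fun x => nu x * f x ^ 2)). set (M1 := sumS (fun x => nu x * f x)).
  assert (E : variance nu f + (M1 - c) ^ 2 = M2 + (-2 * c) * M1 + c ^ 2 * 1).
  { unfold variance. fold M1 M2. ring. }
  rewrite E. eapply HasSum_ext.
  2:{ apply HasSum_plus; [apply HasSum_plus|].
      - apply sumS_spec; eauto.
      - apply HasSum_scal. apply sumS_spec; eauto.
      - apply HasSum_scal. apply Hnu. }
  intros x. simpl. ring.
Qed.

Lemma var_le f c : Summable (fun x => nu x * f x ^ 2) ->
  Summable (fun x => nu x * (f x - c) ^ 2) /\ variance nu f <= sumS (fun x => nu x * (f x - c) ^ 2).
Proof.
  intros H. pose proof (var_identity f c H) as V. split; [eexists; eauto|].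
  rewrite (sumS_eq _ _ V). pose proof (pow2_ge_0 (sumS (fun x => nu x * f x) - c)). lra.
Qed.

Definition Fle (f : St -> R) (t : R) : R := meas nu (fun x => if Rle_dec (f x) t then true else false).

Lemma Fle_mono f s t : s <= t -> Fle f s <= Fle f t.
Proof. intros H. apply meas_mono; auto. intros x. destruct (Rle_dec (f x) s); [|discriminate].
  destruct (Rle_dec (f x) t); auto. lra. Qed.

Lemma median f d : 0 < d -> exists m, / 2 <= Fle f m /\ Fle f (m - d) < / 2.
Proof.
  intros Hd. destruct (proj2 Hnu (/ 2) ltac:(lra)) as [L [NL HL]].
  specialize (HL L NL (incl_refl _)). apply Rabs_def2 in HL.
  set (T1 := maxL f L). set (T0 := - maxL (fun x => - f x) L - 1).
  assert (F1 : / 2 <= Fle f T1).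
  { unfold Fle. eapply Rle_trans; [|apply (meas_ge_fsum nu Hnu _ L NL)].
    rewrite (fsum_ext _ nu); [lra|]. intros x Hx. unfold indm. pose proof (maxL_ge f L x Hx).
    destruct (Rle_dec (f x) T1); auto. exfalso; unfold T1 in n; lra. }
  assert (F0 : Fle f T0 < / 2).
  { unfold Fle. pose proof (meas_compl nu Hnu (fun x => if Rle_dec (f x) T0 then true else false)).
    pose proof (meas_ge_fsum nu Hnu (fun x => negb (if Rle_dec (f x) T0 then true else false)) L NL).
    rewrite (fsum_ext _ nu) in H0; [lra|]. intros x Hx. unfold indm.
    pose proof (maxL_ge (fun x => - f x) L x Hx). simpl in H1.
    destruct (Rle_dec (f x) T0); auto. exfalso; unfold T0 in r; lra. }
  destruct (archimed_cor1 (d / (T1 - T0 + 1))) as [N [HN HN0]].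
  { apply Rdiv_lt_0_compat; auto. assert (T0 <= T1) by (pose proof (Fle_mono f T1 T0); lra). lra. }
  assert (FN : / 2 <= Fle f (T0 + INR N * d)).
  { eapply Rle_trans; [apply F1|]. apply Fle_mono.
    assert (T0 <= T1) by (pose proof (Fle_mono f T1 T0); lra).
    assert (0 < INR N) by (apply lt_0_INR; auto).
    assert (d / (T1 - T0 + 1) * INR N > 1).
    { apply Rmult_lt_compat_r with (r := INR N) in HN; auto. rewrite Rinv_l in HN; lra. }
    unfold Rdiv in H1. assert (d * INR N > T1 - T0 + 1).
    { apply Rmult_lt_compat_r with (r := T1 - T0 + 1) in H1; [|lra].
      replace (d * / (T1 - T0 + 1) * INR N * (T1 - T0 + 1)) with (d * INR N) in H1 by (field; lra). lra. }
    lra. }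
  assert (Srch : forall n, / 2 <= Fle f (T0 + INR n * d) ->
     exists k, Fle f (T0 + INR k * d) < / 2 /\ / 2 <= Fle f (T0 + INR (S k) * d)).
  { induction n as [|n IH]; intros Hn.
    - simpl in Hn. rewrite Rmult_0_l, Rplus_0_r in Hn. lra.
    - destruct (Rle_dec (/ 2) (Fle f (T0 + INR n * d))).
      + apply IH; auto.
      + exists n. split; auto. lra. }
  destruct (Srch N FN) as [k [Hk1 Hk2]].
  exists (T0 + INR (S k) * d). split; auto.
  replace (T0 + INR (S k) * d - d) with (T0 + INR k * d) by (rewrite S_INR; ring). auto.
Qed.

End NuFacts.

Lemma sq_sum_le u w s : 0 <= u -> 0 <= w -> u + w <= s -> u ^ 2 + w ^ 2 <= s ^ 2.
Proof. intros. assert (u ^ 2 + w ^ 2 <= (u + w) ^ 2) by nra.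
  assert ((u + w) ^ 2 <= s ^ 2) by (apply pow_incr; lra). lra. Qed.

Lemma clamp_edge_le a b m m' : m' <= m -> b <= a ->
  (Rmax (a - m) 0 - Rmax (b - m) 0) ^ 2 + (Rmax (m' - a) 0 - Rmax (m' - b) 0) ^ 2 <= (a - b) ^ 2.
Proof.
  intros H Hab. replace ((Rmax (m' - a) 0 - Rmax (m' - b) 0) ^ 2) with ((Rmax (m' - b) 0 - Rmax (m' - a) 0) ^ 2) by ring.
  apply sq_sum_le; unfold Rmax;
  destruct (Rle_dec (a - m) 0); destruct (Rle_dec (b - m) 0);
  destruct (Rle_dec (m' - a) 0); destruct (Rle_dec (m' - b) 0); lra.
Qed.

Lemma clamp_edge a b m m' : m' <= m ->
  (Rmax (a - m) 0 - Rmax (b - m) 0) ^ 2 + (Rmax (m' - a) 0 - Rmax (m' - b) 0) ^ 2 <= (a - b) ^ 2.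
Proof.
  intros H. destruct (Rle_dec b a).
  - apply clamp_edge_le; auto.
  - replace ((a - b) ^ 2) with ((b - a) ^ 2) by ring.
    replace ((Rmax (a - m) 0 - Rmax (b - m) 0) ^ 2) with ((Rmax (b - m) 0 - Rmax (a - m) 0) ^ 2) by ring.
    replace ((Rmax (m' - a) 0 - Rmax (m' - b) 0) ^ 2) with ((Rmax (m' - b) 0 - Rmax (m' - a) 0) ^ 2) by ring.
    apply clamp_edge_le; lra.
Qed.

Lemma clamp01_edge a b : (Rmax 0 (Rmin 1 a) - Rmax 0 (Rmin 1 b)) ^ 2 <= (a - b) ^ 2.
Proof.
  assert (forall a b, b <= a -> (Rmax 0 (Rmin 1 a) - Rmax 0 (Rmin 1 b)) ^ 2 <= (a - b) ^ 2).
  { intros x y Hxy. apply pow_maj_Rabs. rewrite Rabs_right.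
    - unfold Rmax, Rmin. destruct (Rle_dec 1 x); destruct (Rle_dec 1 y);
      repeat match goal with |- context [Rle_dec ?u ?v] => destruct (Rle_dec u v) end; lra.
    - unfold Rmax, Rmin. destruct (Rle_dec 1 x); destruct (Rle_dec 1 y);
      repeat match goal with |- context [Rle_dec ?u ?v] => destruct (Rle_dec u v) end; lra. }
  destruct (Rle_dec b a); [apply H; auto|].
  replace ((a - b) ^ 2) with ((b - a) ^ 2) by ring.
  replace ((Rmax 0 (Rmin 1 a) - Rmax 0 (Rmin 1 b)) ^ 2) with ((Rmax 0 (Rmin 1 b) - Rmax 0 (Rmin 1 a)) ^ 2) by ring.
  apply H; lra.
Qed.

Section Main.
Context {St : Type} (p : St -> St -> R) (mu nu : St -> R)
  (Hp : stochastic p) (Hmu : prob_measure mu) (Hrev : reversible p mu) (Hnu : prob_measure nu).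

Definition i1 (x : St) (y : St) : R := if eq_dec_cl y x then 1 else 0.

Lemma energy_pt x : Summable (dir_term p mu (i1 x)) /\ sumS (dir_term p mu (i1 x)) <= mu x.
Proof.
  replace (mu x) with (2 * (/ 2 * mu x)) by field.
  apply (rowswap_bound (fun q => mu (fst q) * p (fst q) (snd q) * (/ 2 * pt x 1 (fst q)))
     (fun a => mu a * (/ 2 * pt x 1 a))).
  - intros q. pose proof (mu_nonneg mu Hmu (fst q)). pose proof (p_nonneg p Hp (fst q) (snd q)).
    unfold pt. destruct (eq_dec_cl (fst q) x); [|lra].
    apply Rmult_le_pos; [apply Rmult_le_pos|]; lra.
  - intros a Y N. cbn [fst snd]. apply (mu_row p mu Hp Hmu (fun z => / 2 * pt x 1 z)); auto.
    unfold pt. destruct (eq_dec_cl a x); lra.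
  - intros X N. rewrite (fsum_ext _ (pt x (/ 2 * mu x))).
    + apply fsum_pt_le; auto. pose proof (mu_nonneg mu Hmu x). lra.
    + intros a _. unfold pt. destruct (eq_dec_cl a x); subst; ring.
  - apply (dir_term_nonneg p mu Hp Hmu).
  - intros [a b]. unfold dir_term, swap, i1, pt. cbn [fst snd]. rewrite (Hrev b a).
    pose proof (mu_nonneg mu Hmu a). pose proof (p_nonneg p Hp a b).
    assert (0 <= mu a * p a b) by (apply Rmult_le_pos; auto).
    destruct (eq_dec_cl a x); destruct (eq_dec_cl b x); simpl; nra.
Qed.

Section Part1.
Context (Cvar : R) (HC : 0 <= Cvar) (Hcv : cond_var p mu nu Cvar).

Lemma nu_le_mu x : nu x <= / 2 -> nu x <= Cvar * mu x.
Proof.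
  intros Hx. set (A := fun y => if eq_dec_cl y x then true else false).
  pose proof (meas_pt nu Hnu x) as MA. pose proof (meas_compl nu Hnu A) as MC. fold A in MA.
  eapply Rle_trans.
  - rewrite <- MA. apply (Hcv A (fun y => negb (A y))).
    + intros y Hy. rewrite Hy; auto.
    + lra.
    + lra.
  - apply Rmult_le_compat_l; auto. destruct (energy_pt x) as [Es Eb].
    eapply Rle_trans; [|apply Eb]. apply (cap_le_energy p mu Hp Hmu); auto.
    + intros y Hy. unfold A, i1 in *. destruct (eq_dec_cl y x); auto; discriminate.
    + intros y Hy. unfold A, i1 in *. destruct (eq_dec_cl y x); auto; discriminate.
Qed.

Lemma nu_f2_Summable f : l2 mu f -> Summable (fun x => nu x * f x ^ 2).
Proof.
  intros Hf.
  set (h := fun x => if Rle_dec (nu x) (/ 2) then 0 else nu x * f x ^ 2).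
  assert (Hh : Summable h).
  { apply single_support_Summable.
    - intros x. unfold h. destruct (Rle_dec (nu x) (/ 2)); [lra|].
      apply Rmult_le_pos; [apply nu_nonneg; auto|apply pow2_ge_0].
    - intros x y Hx Hy. unfold h in *. destruct (Rle_dec (nu x) (/ 2)); [lra|].
      destruct (Rle_dec (nu y) (/ 2)); [lra|]. apply NNPP. intros Hxy.
      assert (fsum nu [x; y] <= 1).
      { apply nu_fin; auto. constructor; [simpl; intros [E|E]; auto|]. constructor; [simpl; auto|constructor]. }
      simpl in H. lra. }
  apply (dominated_Summable _ (fun x => Cvar * (mu x * f x ^ 2) + h x)).
  - intros x. pose proof (nu_nonneg nu Hnu x). pose proof (pow2_ge_0 (f x)).
    rewrite Rabs_right by (apply Rle_ge, Rmult_le_pos; auto).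
    unfold h. destruct (Rle_dec (nu x) (/ 2)).
    + pose proof (nu_le_mu x r). nra.
    + pose proof (mu_nonneg mu Hmu x). assert (0 <= Cvar * (mu x * f x ^ 2)).
      { apply Rmult_le_pos; auto. apply Rmult_le_pos; auto. }
      lra.
  - apply Summable_plus; auto. apply Summable_scal; auto.
Qed.

Lemma part1 : cond_PI p mu nu (4 * Cvar).
Proof.
  intros f Hf. pose proof (nu_f2_Summable f Hf) as Hn2. split; auto.
  pose proof (dir_Summable p mu Hp Hmu Hrev f Hf) as [Hdf _].
  set (Ef := dirichlet p mu f).
  assert (HEf : 0 <= Ef) by (apply (dirichlet_nonneg p mu Hp Hmu Hrev); auto).
  assert (Key : forall d, 0 < d <= 1 -> variance nu f <= 4 * Cvar * Ef + d * (4 * Cvar * Ef + 2)).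
  { intros d Hd.
    destruct (median nu Hnu f d ltac:(lra)) as [m [Hm1 Hm2]].
    set (m' := m - d).
    set (gp := fun x => Rmax (f x - m) 0). set (gm := fun x => Rmax (m' - f x) 0).
    assert (Dom : forall (w : St -> R) (g : St -> R) (a : R), (forall x, 0 <= w x) ->
        Summable (fun x => w x * f x ^ 2) -> Summable w ->
        (forall x, g x ^ 2 <= 2 * f x ^ 2 + 2 * a ^ 2) -> Summable (fun x => w x * g x ^ 2)).
    { intros w g a Hw H1 H2 Hg. apply (dominated_Summable _ (fun x => 2 * (w x * f x ^ 2) + 2 * a ^ 2 * w x)).
      - intros x. rewrite Rabs_right by (apply Rle_ge, Rmult_le_pos; auto; apply pow2_ge_0).
        specialize (Hg x). specialize (Hw x). nra.
      - apply Summable_plus; apply Summable_scal; auto. }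
    assert (Bp : forall x, gp x ^ 2 <= 2 * f x ^ 2 + 2 * m ^ 2).
    { intros x. unfold gp, Rmax. pose proof (pow2_ge_0 (f x + m)). pose proof (pow2_ge_0 (f x)). pose proof (pow2_ge_0 m). destruct (Rle_dec (f x - m) 0); nra. }
    assert (Bm : forall x, gm x ^ 2 <= 2 * f x ^ 2 + 2 * m' ^ 2).
    { intros x. unfold gm, Rmax. pose proof (pow2_ge_0 (f x + m')). pose proof (pow2_ge_0 (f x)). pose proof (pow2_ge_0 m'). destruct (Rle_dec (m' - f x) 0); nra. }
    assert (Smu : Summable mu) by (exists 1; apply Hmu).
    assert (Snu : Summable nu) by (exists 1; apply Hnu).
    assert (l2p : l2 mu gp) by (apply (Dom mu gp m); auto; apply (mu_nonneg mu Hmu)).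
    assert (l2m : l2 mu gm) by (apply (Dom mu gm m'); auto; apply (mu_nonneg mu Hmu)).
    assert (n2p : Summable (fun x => nu x * gp x ^ 2)) by (apply (Dom nu gp m); auto; apply (nu_nonneg nu Hnu)).
    assert (n2m : Summable (fun x => nu x * gm x ^ 2)) by (apply (Dom nu gm m'); auto; apply (nu_nonneg nu Hnu)).
    set (Bset := fun x => if Rle_dec (f x) m then true else false).
    pose proof (meas_compl nu Hnu Bset) as MCp.
    assert (Pp : sumS (fun x => nu x * gp x ^ 2) <= 4 * (Cvar * dirichlet p mu gp)).
    { apply (one_side p mu nu Hp Hmu Hrev Hnu Cvar HC Hcv gp Bset); auto.
      - intros x. apply Rmax_r.
      - intros x Hx. unfold Bset, gp in *. destruct (Rle_dec (f x) m); [|discriminate]. apply Rmax_right; lra.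
      - intros t Ht. eapply Rle_trans; [apply (meas_mono nu Hnu _ (fun x => negb (Bset x)))|].
        + intros x Hx. unfold Bset, gp in *. destruct (Rlt_dec t (Rmax (f x - m) 0)); [|discriminate].
          destruct (Rle_dec (f x) m); auto. rewrite Rmax_right in r by lra. lra.
        + unfold Fle in Hm1. fold Bset in Hm1. lra. }
    set (Bset' := fun x => negb (if Rle_dec (f x) m' then true else false)).
    pose proof (meas_compl nu Hnu (fun x => if Rle_dec (f x) m' then true else false)) as MCm.
    assert (Hm2' : meas nu (fun x => if Rle_dec (f x) m' then true else false) < / 2) by exact Hm2.
    assert (MB' : meas nu Bset' = 1 - meas nu (fun x => if Rle_dec (f x) m' then true else false)) by (unfold Bset'; lra).
    assert (Pm : sumS (fun x => nu x * gm x ^ 2) <= 4 * (Cvar * dirichlet p mu gm)).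
    { apply (one_side p mu nu Hp Hmu Hrev Hnu Cvar HC Hcv gm Bset'); auto.
      - intros x. apply Rmax_r.
      - intros x Hx. unfold Bset', gm in *. destruct (Rle_dec (f x) m'); [discriminate|]. apply Rmax_right; lra.
      - lra.
      - intros t Ht. eapply Rle_trans; [apply (meas_mono nu Hnu _ (fun x => if Rle_dec (f x) m' then true else false))|].
        + intros x Hx. unfold gm in *. destruct (Rlt_dec t (Rmax (m' - f x) 0)); [|discriminate].
          destruct (Rle_dec (f x) m'); auto. rewrite Rmax_right in r by lra. lra.
        + lra. }
    pose proof (dir_Summable p mu Hp Hmu Hrev gp l2p) as [Hdp _].
    pose proof (dir_Summable p mu Hp Hmu Hrev gm l2m) as [Hdm _].
    assert (Eboth : dirichlet p mu gp + dirichlet p mu gm <= Ef).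
    { apply (HasSum_le (fun q => dir_term p mu gp q + dir_term p mu gm q) (dir_term p mu f)).
      - intros [x y]. unfold dir_term, gp, gm. cbn [fst snd].
        pose proof (clamp_edge (f x) (f y) m m' ltac:(unfold m'; lra)).
        pose proof (mu_nonneg mu Hmu x). pose proof (p_nonneg p Hp x y).
        assert (0 <= / 2 * mu x * p x y) by (apply Rmult_le_pos; [apply Rmult_le_pos|]; lra).
        nra.
      - apply HasSum_plus; apply sumS_spec; auto.
      - apply sumS_spec; auto. }
    assert (Egp : 0 <= dirichlet p mu gp) by (apply (dirichlet_nonneg p mu Hp Hmu Hrev); auto).
    assert (Egm : 0 <= dirichlet p mu gm) by (apply (dirichlet_nonneg p mu Hp Hmu Hrev); auto).
    destruct (var_le nu Hnu f m Hn2) as [Hs2 Hv].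
    assert (Pt : sumS (fun x => nu x * (f x - m) ^ 2) <=
       sumS (fun x => nu x * gp x ^ 2) + (1 + d) * sumS (fun x => nu x * gm x ^ 2) + (d + d ^ 2) * 1).
    { apply (HasSum_le (fun x => nu x * (f x - m) ^ 2)
         (fun x => nu x * gp x ^ 2 + (1 + d) * (nu x * gm x ^ 2) + (d + d ^ 2) * nu x)).
      - intros x. pose proof (nu_nonneg nu Hnu x).
        assert ((f x - m) ^ 2 <= gp x ^ 2 + (1 + d) * gm x ^ 2 + (d + d ^ 2)).
        { unfold gp, gm, m', Rmax. destruct (Rle_dec (f x - m) 0); destruct (Rle_dec (m - d - f x) 0).
          - assert ((f x - m) ^ 2 <= d ^ 2) by (apply pow_maj_Rabs; rewrite Rabs_left1; lra).
            assert (0 <= d ^ 2) by apply pow2_ge_0. simpl. lra.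
          - assert (0 <= (m - d - f x)) by lra.
            assert (0 <= d * (m - d - f x - 1) ^ 2) by (apply Rmult_le_pos; [lra|apply pow2_ge_0]).
            replace (f x - m) with (- ((m - d - f x) + d)) by ring. nra.
          - simpl. nra.
          - lra. }
        nra.
      - apply sumS_spec; auto.
      - apply HasSum_plus; [apply HasSum_plus|].
        + apply sumS_spec; auto.
        + apply HasSum_scal, sumS_spec; auto.
        + apply HasSum_scal, Hnu. }
    assert ((1 + d) * sumS (fun x => nu x * gm x ^ 2) <= (1 + d) * (4 * (Cvar * dirichlet p mu gm)))
      by (apply Rmult_le_compat_l; lra).
    assert (Cvar * dirichlet p mu gm <= Cvar * Ef) by (apply Rmult_le_compat_l; lra).
    assert (Cvar * (dirichlet p mu gp + dirichlet p mu gm) <= Cvar * Ef) by (apply Rmult_le_compat_l; lra).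
    assert (d * (4 * (Cvar * dirichlet p mu gm)) <= d * (4 * (Cvar * Ef))) by (apply Rmult_le_compat_l; lra).
    assert (d ^ 2 <= d) by nra.
    nra. }
  apply Rnot_lt_le. intros Hlt. set (K := 4 * Cvar * Ef + 2).
  assert (HK : 0 < K) by (unfold K; pose proof (Rmult_le_pos _ _ HC HEf); lra).
  set (gap := variance nu f - 4 * Cvar * Ef).
  set (d := Rmin 1 (gap / (2 * K))).
  assert (Hd0 : 0 < d) by (unfold d; apply Rmin_glb_lt; [lra|apply Rdiv_lt_0_compat; unfold gap; lra]).
  assert (Hd1 : d <= 1) by apply Rmin_l.
  assert (Hd2 : d * K <= gap / 2).
  { assert (d <= gap / (2 * K)) by apply Rmin_r.
    apply Rmult_le_compat_r with (r := K) in H; [|lra].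
    replace (gap / (2 * K) * K) with (gap / 2) in H by (field; lra). lra. }
  pose proof (Key d (conj Hd0 Hd1)). fold K in H. unfold gap in *. lra.
Qed.

End Part1.

Section Part2.
Context (CPI : R) (HP : 0 <= CPI) (Hpi : cond_PI p mu nu CPI).

Lemma var_lower (h : St -> R) (A B : St -> bool) :
  (forall x, A x = true -> B x = false) -> (forall x, A x = true -> h x = 1) ->
  (forall x, B x = true -> h x = 0) -> meas nu A <= / 2 -> / 2 <= meas nu B ->
  Summable (fun x => nu x * h x ^ 2) -> meas nu A <= 2 * variance nu h.
Proof.
  intros Hd H1 H0 HA HB Hs.
  set (c := sumS (fun x => nu x * h x)).
  pose proof (var_identity nu Hnu h c Hs) as V. fold c in V.
  rewrite Rminus_diag in V. replace (variance nu h + 0 ^ 2) with (variance nu h) in V by ring.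
  assert (L : (1 - c) ^ 2 * meas nu A + c ^ 2 * meas nu B <= variance nu h).
  { apply (HasSum_le (fun x => (1 - c) ^ 2 * indm nu A x + c ^ 2 * indm nu B x) (fun x => nu x * (h x - c) ^ 2)).
    - intros x. unfold indm. pose proof (nu_nonneg nu Hnu x). pose proof (pow2_ge_0 (h x - c)).
      destruct (A x) eqn:EA.
      + rewrite (Hd x EA). rewrite (H1 x EA). lra.
      + destruct (B x) eqn:EB.
        * rewrite (H0 x EB). replace ((0 - c) ^ 2) with (c ^ 2) by ring. lra.
        * nra.
    - apply HasSum_plus; apply HasSum_scal; apply meas_spec; auto.
    - auto. }
  pose proof (meas_nonneg nu Hnu A). pose proof (pow2_ge_0 c).
  assert (meas nu B * c ^ 2 >= / 2 * c ^ 2) by nra.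
  assert (meas nu A <= 2 * (meas nu A * (1 - c) ^ 2 + / 2 * c ^ 2)).
  { assert (0 <= (/ 2 - meas nu A) * c ^ 2 + meas nu A * (2 * c - 1) ^ 2 / 2) by
      (pose proof (pow2_ge_0 (2 * c - 1)); nra).
    nra. }
  lra.
Qed.

Lemma part2 : cond_var p mu nu (2 * CPI).
Proof.
  intros A B Hd HA HB.
  destruct (classic (exists x, A x = true)) as [Hne|Hemp].
  2:{ assert (HA0 : forall x, A x = false).
      { intros x. destruct (A x) eqn:E; auto. exfalso; apply Hemp; exists x; auto. }
      rewrite (cap_empty p mu A B HA0).
      assert (meas nu A = 0).
      { apply (HasSum_unique (indm nu A)); [apply meas_spec; auto|].
        eapply HasSum_ext; [|apply HasSum_zero]. intros x; unfold indm; rewrite HA0; auto. }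
      lra. }
  assert (Kc : forall e, cap_energies p mu A B e -> meas nu A <= 2 * CPI * e).
  { intros e [g [G1 [G0 Ge]]].
    set (h := fun x => Rmax 0 (Rmin 1 (g x))).
    assert (hb : forall x, Rabs (h x) <= 1).
    { intros x. unfold h, Rmax, Rmin. destruct (Rle_dec 1 (g x)); destruct (Rle_dec 0 _); rewrite ?Rabs_right; try lra.
      all: rewrite Rabs_left; lra. }
    assert (Hl2 : l2 mu h) by (apply (bounded_l2 mu Hmu h 1); auto).
    destruct (Hpi h Hl2) as [Hs Hv].
    assert (Hvl : meas nu A <= 2 * variance nu h).
    { apply (var_lower h A B); auto.
      - intros x Hx. unfold h. rewrite (G1 x Hx). rewrite Rmin_left, Rmax_right; lra.
      - intros x Hx. unfold h. rewrite (G0 x Hx). rewrite Rmin_right, Rmax_left; lra. }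
    assert (Eh : dirichlet p mu h <= e).
    { apply (HasSum_le (dir_term p mu h) (dir_term p mu g)); auto.
      - intros [x y]. unfold dir_term, h. cbn [fst snd].
        pose proof (clamp01_edge (g x) (g y)).
        pose proof (mu_nonneg mu Hmu x). pose proof (p_nonneg p Hp x y).
        assert (0 <= / 2 * mu x * p x y) by (apply Rmult_le_pos; [apply Rmult_le_pos|]; lra).
        nra.
      - apply sumS_spec. apply (dir_Summable p mu Hp Hmu Hrev); auto. }
    assert (CPI * dirichlet p mu h <= CPI * e) by (apply Rmult_le_compat_l; auto).
    lra. }
  set (g0 := fun x => if A x then 1 else 0).
  assert (Hg0 : cap_energies p mu A B (sumS (dir_term p mu g0))).
  { exists g0. repeat split.
    - intros x Hx. unfold g0. rewrite Hx; auto.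
    - intros x Hx. unfold g0. destruct (A x) eqn:E; auto. rewrite (Hd x E) in Hx; discriminate.
    - apply sumS_spec. apply (dir_Summable p mu Hp Hmu Hrev). apply (bounded_l2 mu Hmu g0 1).
      intros x; unfold g0; destruct (A x); rewrite ?Rabs_R1, ?Rabs_R0; lra. }
  destruct (Req_dec CPI 0) as [E0|Epos].
  - pose proof (Kc _ Hg0). rewrite E0 in *. lra.
  - assert (Hpos : 0 < CPI) by lra.
    pose proof (cap_is_inf p mu Hp Hmu A B Hne (ex_intro _ _ Hg0)) as [_ Hglb].
    assert (meas nu A / (2 * CPI) <= cap p mu A B).
    { apply Hglb. intros e He. pose proof (Kc e He).
      apply (Rmult_le_reg_r (2 * CPI)); [lra|]. unfold Rdiv. rewrite Rmult_assoc, Rinv_l by lra. lra. }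
    apply (Rmult_le_compat_r (2 * CPI)) in H; [|lra]. unfold Rdiv in H.
    rewrite Rmult_assoc, Rinv_l in H by lra. lra.
Qed.

End Part2.
End Main.

Theorem mainTheorem10 (S : Type) (p : S -> S -> R) (mu nu : S -> R)
  (HS : countable S) (Hp : stochastic p) (Hirr : irreducible p)
  (Hmu : prob_measure mu) (Hinv : invariant p mu) (Hrev : reversible p mu)
  (Hnu : prob_measure nu) :
  (forall Cvar : R, 0 <= Cvar -> cond_var p mu nu Cvar -> cond_PI p mu nu (4 * Cvar)) /\
  (forall CPI : R, 0 <= CPI -> cond_PI p mu nu CPI -> cond_var p mu nu (2 * CPI)).
Proof.
  split.
  - intros Cvar HC Hcv. exact (part1 p mu nu Hp Hmu Hrev Hnu Cvar HC Hcv).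
  - intros CPI HP Hpi. exact (part2 p mu nu Hp Hmu Hrev Hnu CPI HP Hpi).
Qed.
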